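(* Consider the Variance-shifting Procedure described in the context, with the variance metric of model (I), i.e. $\mathcal{F}(\bar f)=\mathcal{E}$ for every $\bar f$, so $\Delta(\bar f,s^2)=\sum_{ij\in\mathcal{E}}\Delta_{ij}(s^2_{ij})$. Let $\Delta^*=\min\{\Delta(\bar f,\mathbf{V}(\mathcal{A})):(\bar f,\mathcal{A})\text{ compatible}\}$. Then for an iteration $k$ in which $s^2_k$ is computed (Step 4), $\Delta(\bar f^k,s^2_k)<\Delta(\bar f^{k-1},s^2_{k-1})$ unless $\Delta(\bar f^{k-1},s^2_{k-1})=\Delta^*$.
   Context: Network (DC model): bus set $\mathcal{B}$, $n=|\mathcal{B}|$; line set $\mathcal{E}$, $m=|\mathcal{E}|$; each line $ij$ has susceptance $b_{ij}>0$ and limit $f^{\max}_{ij}>0$. $B$ is the $n\times n$ bus susceptance matrix; $\hat B$ is $B$ with last row and column removed (assumed invertible); $\breve B=\begin{pmatrix}\hat B^{-1}&0\\0&0\end{pmatrix}$ with $i$-th row $\breve B_i$; $\pi_{ij}=\breve B_i^T-\breve B_j^T$. $\mathcal{G}\subseteq\mathcal{B}$ is the set of generator buses, with limits $p_i^{\min}\le p_i^{\max}$ and costs $c_i(p)=c_{i0}p^2+c_{i1}p+c_{i2}$, $c_{i0}\ge 0$. $d\in\mathbb{R}^n$ are loads, $\mu\in\mathbb{R}^n$ mean stochastic injections, $\omega$ a zero-mean random vector with covariance $\Omega$. $\mathcal{K}$ is a given convex set of $n\times n$ participation matrices $\mathcal{A}$ (with rows $\mathcal{A}_i$). Safety parameters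 $\nu_{ij}\ge0$ (lines) and $\nu_i\ge0$ (generators) are given. For a matrix $\mathcal{A}$, $\mathbf{V}(\mathcal{A})\in\mathbb{R}^m$ has entries $\mathbf{V}(\mathcal{A})_{ij}=b_{ij}^2\pi_{ij}^T(I-\mathcal{A})\Omega(I-\mathcal{A}^T)\pi_{ij}$. Compatibility: a pair $(\bar f,\mathcal{A})$ with $\bar f\in\mathbb{R}^m$ is compatible if $\mathcal{A}\in\mathcal{K}$ and there exist $\bar p\in\mathbb{R}^n$ (with $\bar p_i=0$ for $i\notin\mathcal{G}$) and $\bar\theta\in\mathbb{R}^n$ with $B\bar\theta=\bar p+\mu-d$; $\bar f_{ij}=b_{ij}(\bar\theta_i-\bar\theta_j)$ and $|\bar f_{ij}|+\nu_{ij}\sqrt{\mathbf{V}(\mathcal{A})_{ij}}\le f^{\max}_{ij}$ for all $ij\in\mathcal{E}$; and $p_i^{\min}+\nu_i\sqrt{\mathcal{A}_i^T\Omega\mathcal{A}_i}\le\bar p_i\le p_i^{\max}-\nu_i\sqrt{\mathcal{A}_i^T\Omega\mathcal{A}_i}$ for all $i\in\mathcal{G}$. Variance metric: for each line $ij$ a convex nondecreasing function $\Delta_{ij}:[0,\infty)\to[0,\infty)$, and for each flow vector $\bar f$ a set $\mathcal{F}(\bar f)\subseteq\mathcal{E}$ depending only on $\bar f$; $\Delta(\bar f,s^2)=\sum_{ij\in\mathcal{F}(\bar f)}\Delta_{ij}(s^2_{ij})$. Subproblems. For $\hat{\mathcal{A}}\in\mathcal{K}$ and $0<\tau<1$, $\mathrm{Reroute}(\hat{\mathcal{A}},\tau)$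 is: minimize $\sum_{i\in\mathcal{G}}[c_{i0}(\bar p_i^2+\hat{\mathcal{A}}_i^T\Omega\hat{\mathcal{A}}_i)+c_{i1}\bar p_i+c_{i2}]$ over $\bar p,\bar f,\bar\theta$ subject to $B\bar\theta=\bar p+\mu-d$, $\bar f_{ij}=b_{ij}(\bar\theta_i-\bar\theta_j)$, $|\bar f_{ij}|+\nu_{ij}\sqrt{\mathbf{V}(\hat{\mathcal{A}})_{ij}}\le(1-\tau)f^{\max}_{ij}$ for all $ij\in\mathcal{E}$, and the generator constraints above with $\hat{\mathcal{A}}$. For $\bar f'$, $\mathcal{A}'$, let $\mathbf{T}(\bar f',\mathcal{A}',\tau)=\{ij\in\mathcal{E}:|\bar f'_{ij}|+\nu_{ij}\sqrt{\mathbf{V}(\mathcal{A}')_{ij}}\ge(1-\tau)f^{\max}_{ij}\}$. $\mathrm{VShift}(\bar f',\mathcal{A}',\tau)$ is: minimize $\sum_{ij\in\mathcal{F}(\bar f')}\Delta_{ij}(s_{ij}^2)$ over $s\in\mathbb{R}^m_{\ge0}$, $\mathcal{A}$ subject to $\mathcal{A}\in\mathcal{K}$, $s_{ij}^2\ge\mathbf{V}(\mathcal{A})_{ij}$ for all $ij\in\mathcal{E}$, and $|\bar f'_{ij}|+\nu_{ij}s_{ij}\le f^{\max}_{ij}$ for $ij\in\mathbf{T}(\bar f',\mathcal{A}',\tau)$. Variance-shifting Procedure. Input: a feasible solution $(\bar p^0,\bar f^0,\mathcal{A}_0)$ (so $(\bar f^0,\mathcal{A}_0)$ is compatible), the metric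 $\Delta$, $0<\tau<1$, and an iteration bound $N\ge1$; set $s^2_0=\mathbf{V}(\mathcal{A}_0)$. For $k=1,\dots,N$: (1) solve $\mathrm{Reroute}(\mathcal{A}_{k-1},\tau)$; if infeasible, stop; else let $(\bar p^k,\bar f^k,\bar\theta^k)$ be an optimal solution. (2) Solve $\mathrm{VShift}(\bar f^k,\mathcal{A}_{k-1},\tau)$, with optimal solution $(\hat s_k,\hat{\mathcal{A}}_k)$. (3) Choose the largest $\lambda\in(0,1]$ such that $(\bar f^k,(1-\lambda)\mathcal{A}_{k-1}+\lambda\hat{\mathcal{A}}_k)$ is compatible. (4) Set $\mathcal{A}_k=(1-\lambda)\mathcal{A}_{k-1}+\lambda\hat{\mathcal{A}}_k$ and $s^2_k=\mathbf{V}(\mathcal{A}_k)$. (5) If $\Delta(\bar f^k,s^2_k)\ge\Delta(\bar f^{k-1},s^2_{k-1})$, stop; otherwise reset $\tau\leftarrow\tau/2$ and continue. *)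

(* Defs.v *)
From HB Require Import structures.
From mathcomp Require Import all_boot all_order all_algebra.
From mathcomp Require Import reals.

Set Implicit Arguments.
Unset Strict Implicit.
Unset Printing Implicit Defensive.

Import Order.TTheory GRing.Theory Num.Theory.
Local Open Scope ring_scope.

(* DC network data. Buses are 'I_n.+1 (the last bus, ord_max, is the one whose
   row/column is removed to form \hat B); lines are 'I_m, line l goes from bus
   [fr l] to bus [tob l]. *)
Record net (R : realType) (n m : nat) := Net {
  fr : 'I_m -> 'I_n.+1;
  tob : 'I_m -> 'I_n.+1;
  susc : 'I_m -> R;
  fmax : 'I_m -> R;
  gens : {set 'I_n.+1};
  pmin : 'I_n.+1 -> R;
  pmax : 'I_n.+1 -> R;
  c0 : 'I_n.+1 -> R;
  c1 : 'I_n.+1 -> R;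
  c2 : 'I_n.+1 -> R;
  load : 'cV[R]_n.+1;
  muinj : 'cV[R]_n.+1;           (* mu, mean stochastic injections *)
  Omega : 'M[R]_n.+1;            (* covariance of omega *)
  Kset : 'M[R]_n.+1 -> Prop;     (* convex set K of participation matrices *)
  nul : 'I_m -> R;
  nug : 'I_n.+1 -> R
}.

Section Defs.
Variables (R : realType) (n m : nat) (N : net R n m).

Definition evec (i : 'I_n.+1) : 'cV[R]_n.+1 := \col_k (k == i)%:R.

Definition Bmat : 'M[R]_n.+1 :=
  \sum_(l < m) susc N l *:
     ((evec (fr N l) - evec (tob N l)) *m (evec (fr N l) - evec (tob N l))^T).

Definition Bhat : 'M[R]_n :=
  \matrix_(i, j) Bmat (lift ord_max i) (lift ord_max j).

Definition Bbreve : 'M[R]_n.+1 :=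
  \matrix_(i, j) match unlift ord_max i, unlift ord_max j with
                 | Some i', Some j' => invmx Bhat i' j'
                 | _, _ => 0
                 end.

Definition piv (l : 'I_m) : 'cV[R]_n.+1 :=
  (row (fr N l) Bbreve - row (tob N l) Bbreve)^T.

Definition Vv (A : 'M[R]_n.+1) (l : 'I_m) : R :=
  susc N l ^+ 2 *
  (((piv l)^T *m (1 - A) *m Omega N *m (1 - A^T) *m piv l) 0 0).

Definition genvar (A : 'M[R]_n.+1) (i : 'I_n.+1) : R :=
  (row i A *m Omega N *m (row i A)^T) 0 0.

Definition nongen_zero (p : 'cV[R]_n.+1) : Prop :=
  forall i, i \notin gens N -> p i 0 = 0.

Definition dc_flow (p th : 'cV[R]_n.+1) (f : 'I_m -> R) : Prop :=
  Bmat *m th = p + muinj N - load N /\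
  forall l, f l = susc N l * (th (fr N l) 0 - th (tob N l) 0).

Definition gen_ok (A : 'M[R]_n.+1) (p : 'cV[R]_n.+1) : Prop :=
  forall i, i \in gens N ->
    pmin N i + nug N i * Num.sqrt (genvar A i) <= p i 0 /\
    p i 0 <= pmax N i - nug N i * Num.sqrt (genvar A i).

Definition compatible (f : 'I_m -> R) (A : 'M[R]_n.+1) : Prop :=
  Kset N A /\
  exists p th : 'cV[R]_n.+1,
    [/\ nongen_zero p, dc_flow p th f,
        (forall l, `|f l| + nul N l * Num.sqrt (Vv A l) <= fmax N l)
      & gen_ok A p].

Definition reroute_feasible (Ah : 'M[R]_n.+1) (tau : R)
    (p : 'cV[R]_n.+1) (f : 'I_m -> R) (th : 'cV[R]_n.+1) : Prop :=
  [/\ nongen_zero p, dc_flow p th f,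
      (forall l, `|f l| + nul N l * Num.sqrt (Vv Ah l) <= (1 - tau) * fmax N l)
    & gen_ok Ah p].

Definition reroute_cost (Ah : 'M[R]_n.+1) (p : 'cV[R]_n.+1) : R :=
  \sum_(i in gens N)
     (c0 N i * (p i 0 ^+ 2 + genvar Ah i) + c1 N i * p i 0 + c2 N i).

Definition reroute_opt (Ah : 'M[R]_n.+1) (tau : R)
    (p : 'cV[R]_n.+1) (f : 'I_m -> R) (th : 'cV[R]_n.+1) : Prop :=
  reroute_feasible Ah tau p f th /\
  forall p' f' th', reroute_feasible Ah tau p' f' th' ->
    reroute_cost Ah p <= reroute_cost Ah p'.

Definition Tset (f' : 'I_m -> R) (A' : 'M[R]_n.+1) (tau : R) (l : 'I_m) : Prop :=
  (1 - tau) * fmax N l <= `|f' l| + nul N l * Num.sqrt (Vv A' l).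

(* variance metric of model (I): F(f) = E for every f *)
Definition DeltaI (Dl : 'I_m -> R -> R) (f : 'I_m -> R) (s2 : 'I_m -> R) : R :=
  \sum_(l < m) Dl l (s2 l).

Definition vshift_feasible (f' : 'I_m -> R) (A' : 'M[R]_n.+1) (tau : R)
    (s : 'I_m -> R) (A : 'M[R]_n.+1) : Prop :=
  [/\ Kset N A, (forall l, 0 <= s l), (forall l, Vv A l <= s l ^+ 2)
    & forall l, Tset f' A' tau l -> `|f' l| + nul N l * s l <= fmax N l].

Definition vshift_opt (Dl : 'I_m -> R -> R) (f' : 'I_m -> R) (A' : 'M[R]_n.+1)
    (tau : R) (s : 'I_m -> R) (A : 'M[R]_n.+1) : Prop :=
  vshift_feasible f' A' tau s A /\
  forall s' A'', vshift_feasible f' A' tau s' A'' ->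
    DeltaI Dl f' (fun l => s l ^+ 2) <= DeltaI Dl f' (fun l => s' l ^+ 2).

End Defs.

Definition convex_set (R : realType) (k : nat) (K : 'M[R]_k -> Prop) : Prop :=
  forall A B (t : R), K A -> K B -> 0 <= t <= 1 -> K ((1 - t) *: A + t *: B).

Definition convex_nonneg (R : realType) (g : R -> R) : Prop :=
  forall x y t : R, 0 <= x -> 0 <= y -> 0 <= t <= 1 ->
    g ((1 - t) * x + t * y) <= (1 - t) * g x + t * g y.

Definition nondecr_nonneg (R : realType) (g : R -> R) : Prop :=
  forall x y : R, 0 <= x -> x <= y -> g x <= g y.

(* Main.v *)
Require Import Defs.
From HB Require Import structures.
From mathcomp Require Import all_boot all_order all_algebra.
From mathcomp Require Import reals.
From mathcomp Require Import lra ring.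
Import Order.TTheory GRing.Theory Num.Theory.
Local Open Scope ring_scope.

Section H.
Variables (R : realType) (k : nat) (O : 'M[R]_k.+1).
Definition qf (x : 'cV[R]_k.+1) : R := (x^T *m O *m x) 0 0.
Definition bf (x y : 'cV[R]_k.+1) : R := (x^T *m O *m y) 0 0.

Lemma qf_lin (a b : R) x y :
  qf (a *: x + b *: y) = a ^+ 2 * qf x + b ^+ 2 * qf y + a * b * (bf x y + bf y x).
Proof.
rewrite /qf /bf !raddfD /= !linearZ /= !mulmxDl -!scalemxAl. 
rewrite !mxE. ring.
Qed.

Lemma qf_conv (t : R) x y : (forall z, 0 <= qf z) -> 0 <= t <= 1 ->
  qf ((1 - t) *: x + t *: y) <= (1 - t) * qf x + t * qf y.
Proof.
move=> Hp /andP[t0 t1].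
have e : x - y = 1 *: x + (-1) *: y by rewrite scale1r scaleN1r.
have h := Hp (x - y). rewrite e qf_lin in h.
rewrite qf_lin.
have h2 : 0 <= t * (1 - t) by apply: mulr_ge0; lra.
have h3 := mulr_ge0 h2 h. nra.
Qed.
End H.
Arguments qf {R k} O x. Arguments bf {R k} O x y.
Section V.
Variables (R : realType) (n m : nat) (N : net R n m).
Definition wv (A : 'M[R]_n.+1) l := (1 - A^T) *m piv N l.

Lemma Vv_qf A l : Vv N A l = susc N l ^+ 2 * qf (Omega N) (wv A l).
Proof.
rewrite /Vv /qf /wv trmx_mul !mulmxA.
have -> : (1 - A^T)^T = 1 - A.
  by apply/matrixP=> i j; rewrite !mxE eq_sym.
by [].
Qed.

Lemma mixE (t : R) A B l :
  wv ((1 - t) *: A + t *: B) l = (1 - t) *: wv A l + t *: wv B l.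
Proof.
rewrite /wv scalemxAl scalemxAl -mulmxDl; congr (_ *m _).
apply/matrixP => i j; rewrite !mxE; ring.
Qed.
End V.
Arguments wv {R n m} N A l.

Lemma sqrt_add (R : realType) (x y : R) : 0 <= x -> 0 <= y ->
  Num.sqrt (x + y) <= Num.sqrt x + Num.sqrt y.
Proof.
move=> hx hy.
have hs : 0 <= Num.sqrt x + Num.sqrt y by rewrite addr_ge0 ?sqrtr_ge0.
rewrite -(ger0_norm hs) -sqrtr_sqr ler_sqrt ?sqr_ge0 //.
rewrite sqrrD !sqr_sqrtr //.
have := mulr_ge0 (sqrtr_ge0 x) (sqrtr_ge0 y). lra.
Qed.

Lemma D_mono (R : realType) (m : nat) (Dl : 'I_m -> R -> R)
  (HDmono : forall l, nondecr_nonneg (Dl l)) (u v : 'I_m -> R) :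
  (forall l, 0 <= u l) -> (forall l, u l <= v l) ->
  \sum_(l < m) Dl l (u l) <= \sum_(l < m) Dl l (v l).
Proof. by move=> h1 h2; apply: ler_sum => l _; apply: HDmono. Qed.

Section W.
Variables (R : realType) (n m : nat) (N : net R n m).
Hypothesis HOpsd : forall x : 'cV[R]_n.+1, 0 <= (x^T *m Omega N *m x) 0 0.

Lemma Vv_ge0 A l : 0 <= Vv N A l.
Proof. by rewrite Vv_qf mulr_ge0 ?sqr_ge0 //; apply: HOpsd. Qed.

Lemma Vv_conv (t : R) A B l : 0 <= t <= 1 ->
  Vv N ((1 - t) *: A + t *: B) l <= (1 - t) * Vv N A l + t * Vv N B l.
Proof.
move=> ht; rewrite !Vv_qf mixE.
have h := @qf_conv R n (Omega N) t (wv N A l) (wv N B l) HOpsd ht.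
have := ler_wpM2l (sqr_ge0 (susc N l)) h.
set a := qf _ _; set b := qf _ _; set c := qf _ _.
move=> H; apply: (le_trans H); rewrite le_eqVlt; apply/orP; left; apply/eqP; ring.
Qed.

Lemma D_conv (Dl : 'I_m -> R -> R)
  (HDconv : forall l, convex_nonneg (Dl l))
  (HDmono : forall l, nondecr_nonneg (Dl l)) (t : R) A B : 0 <= t <= 1 ->
  \sum_(l < m) Dl l (Vv N ((1 - t) *: A + t *: B) l) <=
  (1 - t) * \sum_(l < m) Dl l (Vv N A l) + t * \sum_(l < m) Dl l (Vv N B l).
Proof.
move=> ht; rewrite !mulr_sumr -big_split /=; apply: ler_sum => l _.
apply: le_trans (HDconv l _ _ _ (Vv_ge0 A l) (Vv_ge0 B l) ht).
by apply: HDmono; [apply: Vv_ge0 | apply: Vv_conv].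
Qed.
End W.
Theorem lemma7 (R : realType) (n m : nat) (N : net R n m)
  (* standing assumptions on the network *)
  (Hends : forall l, fr N l != tob N l)
  (Hb : forall l, 0 < susc N l)
  (Hfmax : forall l, 0 < fmax N l)
  (HBhat : Bhat N \in unitmx)
  (Hpm : forall i, i \in gens N -> pmin N i <= pmax N i)
  (Hc0 : forall i, i \in gens N -> 0 <= c0 N i)
  (HOsym : (Omega N)^T = Omega N)
  (HOpsd : forall x : 'cV[R]_n.+1, 0 <= (x^T *m Omega N *m x) 0 0)
  (HK : convex_set (Kset N))
  (Hnul : forall l, 0 <= nul N l)
  (Hnug : forall i, i \in gens N -> 0 <= nug N i)
  (* variance metric, model (I) *)
  (Dl : 'I_m -> R -> R)
  (HDconv : forall l, convex_nonneg (Dl l))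
  (HDmono : forall l, nondecr_nonneg (Dl l))
  (HDpos : forall l x, 0 <= x -> 0 <= Dl l x)
  (* Delta^* : the minimum over compatible pairs (assumed attained) *)
  (Dstar : R)
  (HDstar_att : exists f A, compatible N f A /\ DeltaI Dl f (Vv N A) = Dstar)
  (HDstar_low : forall f A, compatible N f A -> Dstar <= DeltaI Dl f (Vv N A))
  (* state at the start of iteration k: (f^{k-1}, A_{k-1}) compatible *)
  (fprev : 'I_m -> R) (Aprev : 'M[R]_n.+1)
  (Hcompat : compatible N fprev Aprev)
  (tau : R) (Htau : 0 < tau < 1)
  (* Step 1: Reroute(A_{k-1}, tau) feasible with optimal solution *)
  (pk : 'cV[R]_n.+1) (fk : 'I_m -> R) (thk : 'cV[R]_n.+1)
  (Hrr : reroute_opt N Aprev tau pk fk thk)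
  (* Step 2: VShift(f^k, A_{k-1}, tau) optimal solution *)
  (sh : 'I_m -> R) (Ah : 'M[R]_n.+1)
  (Hvs : vshift_opt N Dl fk Aprev tau sh Ah)
  (* Step 3: largest lambda in (0,1] giving a compatible pair *)
  (lam : R) (Hlam : 0 < lam <= 1)
  (Hlc : compatible N fk ((1 - lam) *: Aprev + lam *: Ah))
  (Hlmax : forall mu : R, 0 < mu <= 1 ->
     compatible N fk ((1 - mu) *: Aprev + mu *: Ah) -> mu <= lam) :
  (* Step 4/5 *)
  DeltaI Dl fprev (Vv N Aprev) <> Dstar ->
  DeltaI Dl fk (Vv N ((1 - lam) *: Aprev + lam *: Ah))
    < DeltaI Dl fprev (Vv N Aprev).
Proof.
move=> Hne.
have Hlow := HDstar_low _ _ Hcompat.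
set X := DeltaI Dl fprev (Vv N Aprev) in Hne Hlow *.
have HX : X = \sum_(l < m) Dl l (Vv N Aprev l) by [].
have Hlt : Dstar < X.
  by rewrite lt_def Hlow andbT; apply/eqP => h; apply: Hne; rewrite h.
case: HDstar_att => fs [As [Hcs HDs]].
move: Htau => /andP[t0 t1].
set t := tau ^+ 2.
have tpos : 0 < t by rewrite /t exprn_gt0.
have ht : 0 <= t <= 1.
  apply/andP; split; first exact: ltW.
  rewrite /t expr2; have := mulr_gt0 t0 t0; nra.
set At := (1 - t) *: Aprev + t *: As.
have KAt : Kset N At := @HK _ _ t Hcompat.1 Hcs.1 ht.
case: (Hrr) => [[_ _ Hrrf _] _].
case: (Hcs) => _ [ps [ths [_ _ Hfs _]]].
have Hfeas : vshift_feasible N fk Aprev tau (fun l => Num.sqrt (Vv N At l)) At.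
  split => // l; first exact: sqrtr_ge0.
    by rewrite sqr_sqrtr // Vv_ge0.
  move=> _.
  have h1 := Hrrf l. have h2 := Hfs l.
  have hv := @Vv_conv R n m N HOpsd t Aprev As l ht.
  set a := Vv N Aprev l in h1 hv; set b := Vv N As l in h2 hv.
  have a0 : 0 <= a by apply: Vv_ge0.
  have b0 : 0 <= b by apply: Vv_ge0.
  have hs : Num.sqrt (Vv N At l) <= Num.sqrt a + tau * Num.sqrt b.
    have tb0 : 0 <= t * b by rewrite mulr_ge0 // ltW.
    have ta0 : 0 <= t * a by rewrite mulr_ge0 // ltW.
    apply: (@le_trans _ _ (Num.sqrt (a + t * b))).
      rewrite ler_sqrt; last by rewrite addr_ge0.
      apply: (le_trans hv); lra.
    apply: (le_trans (@sqrt_add _ a (t * b) a0 tb0)).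
    have -> : Num.sqrt (t * b) = tau * Num.sqrt b.
      rewrite sqrtrM; last exact: (ltW tpos).
      rewrite /t sqrtr_sqr ger0_norm //; exact: ltW.
    by [].
  have hs2 := ler_wpM2l (Hnul l) hs.
  have hb : nul N l * Num.sqrt b <= fmax N l.
    have := normr_ge0 (fs l); lra.
  have hb2 := ler_wpM2l (ltW t0) hb.
  have e : nul N l * (Num.sqrt a + tau * Num.sqrt b) =
     nul N l * Num.sqrt a + tau * (nul N l * Num.sqrt b) by ring.
  rewrite e in hs2.
  have ee : (1 - tau) * fmax N l = fmax N l - tau * fmax N l by ring.
  rewrite ee in h1.
  lra.
have Hopt := Hvs.2 _ _ Hfeas.
case: (Hvs.1) => _ Hsh0 HshV _.
have E1 : \sum_(l < m) Dl l (Vv N Ah l) <= \sum_(l < m) Dl l (sh l ^+ 2).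
  apply: D_mono => // l; exact: Vv_ge0.
have E2 : DeltaI Dl fk (fun l => Num.sqrt (Vv N At l) ^+ 2)
          = \sum_(l < m) Dl l (Vv N At l).
  by apply: eq_bigr => l _; rewrite sqr_sqrtr // Vv_ge0.
have E3 := @D_conv R n m N HOpsd Dl HDconv HDmono t Aprev As ht.
move: Hlam => /andP[l0 l1].
have hl : 0 <= lam <= 1 by rewrite l1 andbT ltW.
have E4 := @D_conv R n m N HOpsd Dl HDconv HDmono lam Aprev Ah hl.
rewrite /DeltaI in Hopt E2 HDs *.
rewrite E2 in Hopt.
rewrite -HX HDs in E3.
rewrite -HX in E4.
set Y := \sum_(l < m) Dl l (Vv N Ah l) in E1 E4 *.
set Z := \sum_(l < m) Dl l (Vv N At l) in E2 E3 Hopt.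
set W := \sum_(l < m) Dl l (sh l ^+ 2) in E1 Hopt.
have HYX : Y < X.
  have d1 : 0 < X - Dstar by rewrite subr_gt0.
  have := mulr_gt0 tpos d1. nra.
have d2 : 0 < X - Y by rewrite subr_gt0.
have := mulr_gt0 l0 d2. nra.
Qed.
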